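(* Let $k\ge 0$ be an integer, $N_o=2^k$, and let $\mathbf{P}_k=\mathbf{P}^{\otimes k}$ be the $k$-th Kronecker power of $\mathbf{P}=\begin{bmatrix}1&0\\1&1\end{bmatrix}$ over $\mathrm{GF}(2)$ (with $\mathbf{P}_0=[1]$). Let $\mathbf{c}=(c_0,\dots,c_m)\in\{0,1\}^{m+1}$ with $c_0=1$, and fix an arbitrary initial shift-register state $\mathbf{s}=(s_0,\dots,s_{m-1})\in\{0,1\}^m$. For $b\in\{0,1\}$, let $\mathbf{v}^{(b)}=(v_0,\dots,v_{N_o-1})$ be the message vector with $v_0=\dots=v_{N_o-2}=0$ and $v_{N_o-1}=b$, let $\mathbf{u}^{(b)}$ be its convolutional encoding with impulse response $\mathbf{c}$ starting from state $\mathbf{s}$, and let $\boldsymbol{\beta}_b=\mathbf{u}^{(b)}\mathbf{P}_k$. Then $\boldsymbol{\beta}_0\oplus\boldsymbol{\beta}_1=\mathbf{1}$, the all-ones vector of length $N_o$.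
   Context: All arithmetic is over $\mathrm{GF}(2)$; vectors are row vectors and rows/columns of $\mathbf{P}_k$ are indexed $0,\dots,N_o-1$. Convolutional encoding of $\mathbf{v}=(v_0,\dots,v_{N_o-1})$ with impulse response $\mathbf{c}$ from state $\mathbf{s}$ is defined sequentially for $i=0,\dots,N_o-1$: $u_i = c_0 v_i \oplus \bigoplus_{j=1}^{m} c_j s_{j-1}$, after which the state is updated to $\mathbf{s}\leftarrow(v_i,s_0,\dots,s_{m-2})$. (This setting is a ''Rev node'' of a polarization-adjusted convolutional code: the first $N_o-1$ message bits are frozen to zero and only the last one is an information bit.) *)

(* Defs.v *)
From mathcomp Require Import all_boot all_algebra.
From mathcomp Require Export mxtens.
Set Implicit Arguments. Unset Strict Implicit. Unset Printing Implicit Defensive.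
Import GRing.Theory.
Local Open Scope ring_scope.

(* The polarization kernel P = [[1,0],[1,1]] over GF(2). *)
Definition Pker : 'M['F_2]_2 :=
  \matrix_(i < 2, j < 2) (if (i == 0 :> nat) && (j == 1 :> nat) then 0 else 1).

Definition Pk (k : nat) : 'M['F_2]_(2 ^ k) := ntensmx Pker k.

(* Convolutional encoding, sequentially as in the paper:
   u_i = c_0 v_i + sum_{j=1}^m c_j s_{j-1}, then s <- (v_i, s_0, ..., s_{m-2}).
   Here c has size m+1 and s has size m. *)
Fixpoint conv_enc (c s v : seq 'F_2) : seq 'F_2 :=
  match v with
  | [::] => [::]
  | x :: v' =>
      (c`_0 * x + \sum_(1 <= j < size c) c`_j * s`_(j.-1))
        :: conv_enc c (take (size s) (x :: s)) v'
  end.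

Definition rev_msg (N : nat) (b : 'F_2) : seq 'F_2 :=
  [seq (if i == N.-1 then b else 0) | i <- iota 0 N].

Definition rev_codeword (k m : nat) (c : (m.+1).-tuple 'F_2) (s : m.-tuple 'F_2)
  (b : 'F_2) : 'rV['F_2]_(2 ^ k) :=
  \row_(i < 2 ^ k) (conv_enc c s (rev_msg (2 ^ k) b))`_i.

Definition beta (k m : nat) (c : (m.+1).-tuple 'F_2) (s : m.-tuple 'F_2)
  (b : 'F_2) : 'rV['F_2]_(2 ^ k) :=
  rev_codeword k c s b *m Pk k.

(* Main.v *)
Require Import Defs.
From mathcomp Require Import all_boot all_algebra zify.
Import GRing.Theory.
Local Open Scope ring_scope.

Lemma F2_addxx (x : 'F_2) : x + x = 0.
Proof. by case: x => [[|[|n]] Hx] //; apply: val_inj. Qed.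

Lemma natfact (a b n : nat) : (a < 2 -> b < n -> a * n + b = (2 * n).-1 ->
   a = 1 /\ b = n.-1)%N.
Proof. move=> ha hb; case: a ha => [|[|]] // _; lia. Qed.

Lemma Pk_last k (i j : 'I_(2 ^ k)) : val i = (2 ^ k).-1%N -> Pk k i j = 1.
Proof.
case: k i j => [|k] i j.
  by rewrite /Pk ntensmx0 => hi; rewrite [i]ord1 [j]ord1 mxE.
elim: k i j => [|k IH] i j hi.
  rewrite /Pk ntensmx1 mxE.
  by case: i hi => [[|[|]]] //= _ _; rewrite andFb.
rewrite /Pk ntensmxSS.
case: (mxtens_indexP i) hi => i0 i1 hi; case: (mxtens_indexP j) => j0 j1.
rewrite tensmxE.
have hh : (i0 * 2 ^ k.+1 + i1 = (2 * 2 ^ k.+1).-1)%N := hi.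
have [hi0 hi1] := natfact _ _ _ (ltn_ord i0) (ltn_ord i1) hh.
rewrite (IH i1 j1 hi1) mulr1 mxE.
by clear hi hh; case: i0 hi0 => [[|[|]]] //= _ _; rewrite andFb.
Qed.

Lemma size_conv c s v : size (conv_enc c s v) = size v.
Proof. by elim: v s => [|x v IH] s //=; rewrite IH. Qed.

Lemma conv_snoc c p : forall s, exists z, forall x,
  conv_enc c s (p ++ [:: x]) = conv_enc c s p ++ [:: c`_0 * x + z].
Proof.
elim: p => [|a p IH] s /=.
  by exists (\sum_(1 <= j < size c) c`_j * s`_(j.-1)).
have [z Hz] := IH (take (size s) (a :: s)).
by exists z => x; rewrite Hz.
Qed.

Lemma rev_msgE N b : (0 < N)%N -> rev_msg N b = nseq N.-1 0 ++ [:: b].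
Proof.
case: N => [|N] // _; rewrite /rev_msg.
have -> : iota 0 N.+1 = iota 0 N ++ [:: N] by rewrite -addn1 iotaD.
rewrite map_cat /= eqxx.
congr (_ ++ _); transitivity [seq (0 : 'F_2) | _ <- iota 0 N].
  by apply/eq_in_map => i; rewrite mem_iota add0n => /andP[_ /ltn_eqF ->].
by rewrite -{2}(size_iota 0 N); elim: (iota 0 N) => //= a l ->.
Qed.

Lemma codeword_diff k m (c : (m.+1).-tuple 'F_2) (s : m.-tuple 'F_2) :
  c`_0 = 1 -> forall i : 'I_(2 ^ k),
  rev_codeword k c s 0 0 i + rev_codeword k c s 1 0 i =
  (val i == (2 ^ k).-1)%:R.
Proof.
move=> c0 i; rewrite !mxE.
have hN : (0 < 2 ^ k)%N by rewrite expn_gt0.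
rewrite !rev_msgE //.
have [z Hz] := conv_snoc c (nseq (2 ^ k).-1 0) s.
rewrite !Hz !nth_cat size_conv size_nseq.
case: ltngtP => hi.
- by rewrite F2_addxx.
- by have := ltn_ord i; rewrite -[X in (_ < X)%N](prednK hN) ltnS leqNgt hi.
- by rewrite hi subnn /= c0 mulr0 mulr1 add0r addrCA F2_addxx addr0.
Qed.

Lemma codeword_diff2 k m (c : (m.+1).-tuple 'F_2) (s : m.-tuple 'F_2) :
  c`_0 = 1 -> forall i : 'I_(2 ^ k),
  (rev_codeword k c s 0 + rev_codeword k c s 1) 0 i =
  (val i == (2 ^ k).-1)%:R.
Proof. by move=> c0 i; rewrite [LHS]mxE codeword_diff. Qed.

Theorem theorem1 (k m : nat) (c : (m.+1).-tuple 'F_2) (s : m.-tuple 'F_2) :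
  c`_0 = 1 ->
  beta k c s 0 + beta k c s 1 = const_mx 1.
Proof.
move=> c0; rewrite /beta -mulmxDl; apply/matrixP => i j.
have hN : ((2 ^ k).-1 < 2 ^ k)%N by rewrite prednK // expn_gt0.
rewrite [i]ord1 !mxE (bigD1 (Ordinal hN)) //= big1 ?addr0.
  rewrite (codeword_diff2 _ _ _ _ c0) eqxx mul1r; exact: Pk_last.
move=> l hl; rewrite (codeword_diff2 _ _ _ _ c0).
suff -> : (val l == (2 ^ k).-1) = false by rewrite mul0r.
by apply/negbTE; apply: contra hl => /eqP h; apply/eqP/val_inj.
Qed.
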